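(* Consider the parametrized system $A\,(c\circ x^B)=0$ with $\ell$ classes as in the context, and assume: (i) $\ker A\cap\mathbb{R}^m_{>0}\neq\emptyset$; (ii) $d=d_1+\cdots+d_\ell$; (iii) for every $j=1,\dots,\ell$: $d_j=\dim P_j\le1$, and if $d_j=1$ then $\sum_{i'=1}^{i}\tilde b^j_{i'}\ge0$ for all $i=1,\dots,\omega_j-1$ (or $\le0$ for all such $i$) and $\tilde b^j_1\cdot\tilde b^j_{\omega_j}<0$. Then $|Y_c|=1$ for all $c\in\mathbb{R}^m_{>0}$.
   Context: Notation: for $x\in\mathbb{R}^n_{>0}$ and $y\in\mathbb{R}^n$, $x^y=\prod_i x_i^{y_i}$; for $B=(b^1,\dots,b^m)$, $x^B$ has entries $x^{b^j}$; $\circ$ is the componentwise product; $(\cdot)^{-1}$ of a positive vector is componentwise; $1_k$ is the all-ones vector in $\mathbb{R}^k$. Setting with classes: $A=(A_1\ \cdots\ A_\ell)\in\mathbb{R}^{l\times m}$ with blocks $A_j\in\mathbb{R}^{l\times m_j}$, $m_1+\cdots+m_\ell=m$, such that $\ker A=\ker A_1\times\cdots\times\ker A_\ell$; correspondingly $B=(B_1\ \cdots\ B_\ell)\in\mathbb{R}^{n\times m}$ with $B_j\in\mathbb{R}^{n\times m_j}$ and $c=(c^1,\dots,c^\ell)$ with $c^j\in\mathbb{R}^{m_j}_{>0}$. For each $j$, $P_j=\{y\in\ker A_j\cap\mathbb{R}^{m_j}_{>0}: 1_{m_j}\cdot y=1\}$ and the coefficient polytope is $P=P_1\times\cdots\times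 P_\ell$. Let $J\in\mathbb{R}^{\ell\times m}$ be block diagonal with diagonal blocks $1_{m_j}^{\mathsf T}$. The monomial dependency subspace is $D=\ker\begin{pmatrix}B\\ J\end{pmatrix}\subseteq\mathbb{R}^m$, $d=\dim D$, and $d_j=\dim\ker\begin{pmatrix}B_j\\ 1_{m_j}^{\mathsf T}\end{pmatrix}$. The solution set on the coefficient polytope is $Y_c=\{y\in P: y^z=c^z\text{ for all }z\in D\}$. For $j$ with $\dim P_j=1$: let $y^{j,1},y^{j,2}$ be the endpoints of the segment $\overline{P_j}=\{y\in\ker A_j\cap\mathbb{R}^{m_j}_{\ge0}:1_{m_j}\cdot y=1\}$, $q^j=(y^{j,1}-y^{j,2})\circ(y^{j,1}+y^{j,2})^{-1}$, indices reordered so that $1=q^j_1\ge\cdots\ge q^j_{m_j}=-1$, and $I^j_1,\dots,I^j_{\omega_j}$ the equivalence classes of equal consecutive components of $q^j$ (in decreasing order of the common value). For $j$ with $d_j=1$: $b^j\in\mathbb{R}^{m_j}$ spans $\ker\begin{pmatrix}B_j\\ 1_{m_j}^{\mathsf T}\end{pmatrix}$ and $\tilde b^j\in\mathbb{R}^{\omega_j}$ has entries $\tilde b^j_i=\sum_{i'\in I^j_i}b^j_{i'}$. *)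

(* Defs.v *)
From HB Require Import structures.
From mathcomp Require Import all_boot all_order all_algebra.
From mathcomp Require Import reals exp.
Set Implicit Arguments. Unset Strict Implicit. Unset Printing Implicit Defensive.
Import Order.TTheory GRing.Theory Num.Theory.
Local Open Scope ring_scope.

(* Encoding of the classes: the m reaction/monomial indices 'I_m are split
   into L classes by  cls : 'I_m -> 'I_L ; the block A_j (resp. B_j, c^j) is
   the set of columns (entries) i with cls i = j.  Vectors of R^m are row
   vectors 'rV[R]_m; vectors of R^{m_j} are identified with vectors of R^m
   supported on class j. *)

Section Defs.
Variables (R : realType) (l n m L : nat).
Variables (A : 'M[R]_(l, m)) (B : 'M[R]_(n, m)) (cls : 'I_m -> 'I_L).

Definition clmask (j : 'I_L) (y : 'rV[R]_m) : 'rV[R]_m :=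
  \row_i (if cls i == j then y 0 i else 0).

Definition mpow (x y : 'rV[R]_m) : R := \prod_(i < m) (x 0 i) `^ (y 0 i).

(* J : block diagonal with blocks 1_{m_j}^T *)
Definition Jmat : 'M[R]_(L, m) := \matrix_(j, i) (cls i == j)%:R.

(* D = ker (B ; J); a square matrix whose row space is D *)
Definition Dsp : 'M[R]_m := kermx (col_mx B Jmat)^T.
Definition dimD : nat := \rank Dsp.

(* ker (B_j ; 1_{m_j}^T), embedded in R^m as vectors supported on class j *)
Definition onesj (j : 'I_L) : 'rV[R]_m := \row_i (cls i == j)%:R.
Definition offj (j : 'I_L) : 'M[R]_m := diag_mx (\row_i (cls i != j)%:R).
Definition Djsp (j : 'I_L) : 'M[R]_m :=
  kermx (col_mx (col_mx B (onesj j)) (offj j))^T.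
Definition dimDj (j : 'I_L) : nat := \rank (Djsp j).

Definition Pj (j : 'I_L) (y : 'rV[R]_m) : Prop :=
  [/\ forall i, cls i != j -> y 0 i = 0,
      forall i, cls i == j -> 0 < y 0 i,
      A *m y^T = 0
    & \sum_(i | cls i == j) y 0 i = 1].
Definition Pbarj (j : 'I_L) (y : 'rV[R]_m) : Prop :=
  [/\ forall i, cls i != j -> y 0 i = 0,
      forall i, cls i == j -> 0 <= y 0 i,
      A *m y^T = 0
    & \sum_(i | cls i == j) y 0 i = 1].

Definition Ppoly (y : 'rV[R]_m) : Prop := forall j, Pj j (clmask j y).

Definition Yc (c : 'rV[R]_m) (y : 'rV[R]_m) : Prop :=
  Ppoly y /\ forall z : 'rV[R]_m, (z <= Dsp)%MS -> mpow y z = mpow c z.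

Definition qj (y1 y2 : 'rV[R]_m) (i : 'I_m) : R :=
  (y1 0 i - y2 0 i) / (y1 0 i + y2 0 i).

(* the distinct values of q^j on class j, in decreasing order;
   its length is omega_j, and value number k determines I^j_{k+1} *)
Definition qvals (j : 'I_L) (y1 y2 : 'rV[R]_m) : seq R :=
  sort (fun a b => b <= a) (undup [seq qj y1 y2 i | i <- enum 'I_m & cls i == j]).

(* tilde b^j_{k+1} (0-indexed k) *)
Definition btilde (j : 'I_L) (y1 y2 b : 'rV[R]_m) (k : nat) : R :=
  \sum_(i | (cls i == j) && (qj y1 y2 i == nth 0 (qvals j y1 y2) k)) b 0 i.

End Defs.

(* The empty set has no dimension in nat (its dimension is -1). *)
Definition affdim (R : fieldType) (m : nat) (S : 'rV[R]_m -> Prop) (r : nat) : Prop :=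
  (exists x, S x) /\
  exists V : 'M[R]_m,
    [/\ \rank V = r,
        forall x y, S x -> S y -> (x - y <= V)%MS
      & forall W : 'M[R]_m, (forall x y, S x -> S y -> (x - y <= W)%MS) -> (V <= W)%MS].

(* Main.v *)
Require Import Defs.
From HB Require Import structures.
From mathcomp Require Import all_boot all_order all_algebra.
From mathcomp Require Import reals exp.
From mathcomp Require Import boolp classical_sets topology normedtype sequences.
From mathcomp Require Import ring lra.
Import Order.TTheory GRing.Theory Num.Theory.
Import numFieldNormedType.Exports.
Local Open Scope ring_scope.

Section Core.
Variable R : realType.

Lemma ln_diff_pos (a b c d : R) : 0 < a -> 0 < b -> 0 < c -> 0 < d ->
  b * c < a * d -> 0 < (ln a - ln b) - (ln c - ln d).
Proof.
move=> a0 b0 c0 d0 H.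
have -> : (ln a - ln b) - (ln c - ln d) = ln (a * d) - ln (b * c).
  by rewrite !lnM ?posrE //; lra.
by rewrite subr_gt0 ltr_ln ?posrE ?mulr_gt0.
Qed.

Lemma ln_diff_ge0 (a b c d : R) : 0 < a -> 0 < b -> 0 < c -> 0 < d ->
  b * c <= a * d -> 0 <= (ln a - ln b) - (ln c - ln d).
Proof.
move=> a0 b0 c0 d0 H.
have -> : (ln a - ln b) - (ln c - ln d) = ln (a * d) - ln (b * c).
  by rewrite !lnM ?posrE //; lra.
by rewrite subr_ge0 ler_ln ?posrE ?mulr_gt0.
Qed.

Lemma abel (be x : nat -> R) (N : nat) :
  \sum_(k < N.+1) be k * x k =
  \sum_(k < N) (\sum_(k' < k.+1) be k') * (x k - x k.+1)
  + (\sum_(k' < N.+1) be k') * x N.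
Proof.
elim: N => [|N IH]; first by rewrite !big_ord1 big_ord0 add0r.
rewrite big_ord_recr IH /=.
rewrite [\sum_(k < N.+1) _ * (_ - _)]big_ord_recr /=.
rewrite [\sum_(k' < N.+2) be k']big_ord_recr /=.
set S := \sum_(k' < N.+1) be k'.
rewrite mulrDl mulrBr; lra.
Qed.


Lemma cont_sum (N : nat) (f : nat -> R -> R) (x : R) :
  (forall k, (k < N)%N -> {for x, continuous (f k)}) ->
  {for x, continuous (fun u => \sum_(k < N) f k u)}.
Proof.
elim: N => [|N IH] hf.
  rewrite (_ : (fun u => _) = (fun _ => 0)); last by apply: funext => u; rewrite big_ord0.
  exact: cst_continuous.
rewrite (_ : (fun u => _) = (fun u => \sum_(k < N) f k u) \+ f N); last first.
  by apply: funext => u; rewrite big_ord_recr.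
apply: continuousD; [apply: IH => k hk; apply: hf; exact: ltnW | by apply: hf].
Qed.

Lemma cont_term (a q x : R) : 0 < 1 + q * x ->
  {for x, continuous (fun u => a * ln (1 + q * u))}.
Proof.
move=> hx.
have c1 : {for x, continuous (fun u : R => 1 + q * u)}.
  apply: continuousD; first exact: cst_continuous.
  apply: continuousM; first exact: cst_continuous.
  done.
have c2 := continuous_comp c1 (continuous_ln hx).
apply: continuousM; first exact: cst_continuous.
exact: c2.
Qed.

Section Mono.
Variables (n : nat) (Q be : nat -> R).
Hypotheses (hQ0 : Q 0%N = 1) (hQn : Q n.+1 = -1)
  (hQdec : forall k, (k < n.+1)%N -> Q k.+1 < Q k)
  (hS : forall k, (k < n.+1)%N -> 0 <= \sum_(k' < k.+1) be k')
  (hsum : \sum_(k < n.+2) be k = 0)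
  (hprod : be 0%N * be n.+1 < 0).

Definition hh (u : R) := \sum_(k < n.+2) be k * ln (1 + Q k * u).
Let S k := \sum_(k' < k.+1) be k'.

Lemma Q_le1 k : (k < n.+2)%N -> Q k <= 1.
Proof.
elim: k => [|k IH] hk; first by rewrite hQ0.
have hk' : (k < n.+1)%N by [].
by apply: le_trans (IH (ltnW hk)); apply/ltW/hQdec.
Qed.

Lemma Q_gem1 k : (k < n.+2)%N -> -1 <= Q k.
Proof.
move=> hk; have [d hd] : exists d, (k + d)%N = n.+1.
  by exists (n.+1 - k)%N; rewrite subnKC // -ltnS.
elim: d k hk hd => [|d IH] k hk hd; first by rewrite addn0 in hd; rewrite hd hQn.
have hk1 : (k < n.+1)%N by rewrite -hd addnS ltnS leq_addr.
have h2 : -1 <= Q k.+1 by apply: IH => //; rewrite addSnnS.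
by apply: (le_trans h2); apply/ltW/hQdec.
Qed.

Lemma pos_arg k u : (k < n.+2)%N -> -1 < u < 1 -> 0 < 1 + Q k * u.
Proof.
move=> hk /andP[h1 h2]; have := Q_le1 k hk; have := Q_gem1 k hk => q1 q2.
have [q0|q0] := leP 0 (Q k).
  nra.
nra.
Qed.

Lemma be0_pos : 0 < be 0%N.
Proof.
have h0 : 0 <= be 0%N by have := hS 0%N (ltn0Sn n); rewrite big_ord1.
rewrite lt_neqAle h0 andbT; apply/eqP => e; move: hprod; by rewrite -e mul0r ltxx.
Qed.

Lemma ben_neg : be n.+1 < 0.
Proof. by move: hprod; rewrite pmulr_rlt0 // be0_pos. Qed.

Lemma Sn_pos : 0 < S n.
Proof.
have : S n + be n.+1 = \sum_(k < n.+2) be k by rewrite [in RHS]big_ord_recr.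
rewrite hsum.
have := ben_neg; lra.
Qed.

Definition dl u v k := (ln (1 + Q k * v) - ln (1 + Q k * u))
                      - (ln (1 + Q k.+1 * v) - ln (1 + Q k.+1 * u)).

Lemma hh_diff u v : hh v - hh u = \sum_(k < n.+1) S k * dl u v k.
Proof.
rewrite /hh -sumrB.
under eq_bigr => k _ do rewrite -mulrBr.
rewrite (abel be (fun k => ln (1 + Q k * v) - ln (1 + Q k * u)) n.+1).
by rewrite hsum mul0r addr0.
Qed.

Lemma dl_ge0 u v k : -1 < u -> u <= v -> v < 1 -> (k < n.+1)%N -> 0 <= dl u v k.
Proof.
move=> hu huv hv hk; rewrite /dl.
have hk2 : (k < n.+2)%N by apply: ltnW.
have hk1 : (k.+1 < n.+2)%N by [].
have hq := hQdec _ hk.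
apply: ln_diff_ge0; try apply: pos_arg => //; try (apply/andP; split => //; lra).
have e1 : 0 <= Q k - Q k.+1 by rewrite subr_ge0 ltW.
have e2 : 0 <= v - u by rewrite subr_ge0.
have := mulr_ge0 e1 e2; nra.
Qed.


Lemma dl_gt0 u v k : -1 < u -> u < v -> v < 1 -> (k < n.+1)%N -> 0 < dl u v k.
Proof.
move=> hu huv hv hk; rewrite /dl.
have hk2 : (k < n.+2)%N by apply: ltnW.
have hk1 : (k.+1 < n.+2)%N by [].
have hq := hQdec _ hk.
apply: ln_diff_pos; try apply: pos_arg => //; try (apply/andP; split => //; lra).
have e1 : 0 < Q k - Q k.+1 by rewrite subr_gt0.
have e2 : 0 < v - u by rewrite subr_gt0.
have := mulr_gt0 e1 e2; nra.
Qed.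

Lemma S_ge0 k : (k < n.+1)%N -> 0 <= S k.
Proof. exact: hS. Qed.

Lemma hh_incr u v : -1 < u -> u < v -> v < 1 -> hh u < hh v.
Proof.
move=> hu huv hv; rewrite -subr_gt0 hh_diff big_ord_recl /=.
have t0 : 0 < S 0%N * dl u v 0%N.
  apply: mulr_gt0; first by rewrite /S big_ord1 be0_pos.
  exact: dl_gt0.
have t1 : 0 <= \sum_(i < n) S (bump 0 i) * dl u v (bump 0 i).
  apply: sumr_ge0 => i _; apply: mulr_ge0; first exact: (S_ge0 _ (ltn_ord (lift ord0 i))).
  apply: dl_ge0 => //; [exact: ltW | exact: (ltn_ord (lift ord0 i))].
lra.
Qed.

Lemma hh0 : hh 0 = 0.
Proof.
rewrite /hh.
apply: big1 => k _.
rewrite mulr0.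
rewrite addr0.
rewrite ln1.
by rewrite mulr0. Qed.

Lemma hh_above tau : exists v, 0 <= v < 1 /\ tau <= hh v.
Proof.
have q0 : -1 < Q n by rewrite -hQn; apply: hQdec.
have q1 : Q n <= 1 by apply: Q_le1.
set m0 := (1 + Q n) / 2.
have m0p : 0 < m0 by rewrite /m0; lra.
have Sp := Sn_pos.
set K := `|tau| / S n + `|ln m0| + 1.
have Kp : 0 < K by rewrite /K; have := normr_ge0 (ln m0); have := divr_ge0 (normr_ge0 tau) (ltW Sp); lra.
set v := 1 - expR (- K).
have ev : 0 < expR (- K) by apply: expR_gt0.
have ev1 : expR (- K) < 1 by rewrite expR_lt1; lra.
have v0 : 0 <= v by rewrite /v; lra.
have v1 : v < 1 by rewrite /v; lra.
exists v; split; first by rewrite v0 v1.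
rewrite -[hh v]subr0 -hh0 hh_diff big_ord_recr /=.
have t1 : 0 <= \sum_(i < n) S i * dl 0 v i.
  apply: sumr_ge0 => i _; apply: mulr_ge0; first exact: (S_ge0 _ (leqW (ltn_ord i))).
  apply: dl_ge0 => //; [lra | exact: (leqW (ltn_ord i))].
have hd : dl 0 v n = ln (1 + Q n * v) + K.
  rewrite /dl !mulr0 !addr0 ln1 hQn.
  have -> : 1 + -1 * v = expR (- K) by rewrite /v; lra.
  by rewrite expRK; lra.
have hl : ln m0 <= ln (1 + Q n * v).
  rewrite ler_ln ?posrE //; last by apply: pos_arg => //; apply/andP; split; lra.
  have a1 : 0 <= 1 - v by lra.
  have a2 : 0 <= 1 - Q n by lra.
  have a3 : 0 <= 1 + Q n by lra.
  rewrite /m0; have := mulr_ge0 a1 a2; have := mulr_ge0 v0 a3; nra.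
have hn : - `|ln m0| <= ln m0 by have := ler_norm (- ln m0); rewrite normrN; lra.
have ht : tau <= `|tau| := ler_norm tau.
have : S n * (`|tau| / S n) = `|tau| by rewrite mulrC divfK //; apply: lt0r_neq0.
rewrite hd.
have : S n * (ln (1 + Q n * v) + K) >= S n * (`|tau| / S n + 1).
  apply: ler_wpM2l; first exact: ltW.
  rewrite /K; lra.
nra.
Qed.

Lemma hh_below tau : exists u, -1 < u <= 0 /\ hh u <= tau.
Proof.
have q0 : Q 1%N < 1 by rewrite -hQ0; apply: hQdec.
have q1 : -1 <= Q 1%N by apply: Q_gem1.
set m1 := (1 - Q 1%N) / 2.
have m1p : 0 < m1 by rewrite /m1; lra.
have Sp : 0 < S 0%N by rewrite /S big_ord1 be0_pos.
set K := `|tau| / S 0%N + `|ln m1| + 1.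
have Kp : 0 < K by rewrite /K; have := normr_ge0 (ln m1); have := divr_ge0 (normr_ge0 tau) (ltW Sp); lra.
set u := expR (- K) - 1.
have ev : 0 < expR (- K) by apply: expR_gt0.
have ev1 : expR (- K) < 1 by rewrite expR_lt1; lra.
have u0 : u <= 0 by rewrite /u; lra.
have u1 : -1 < u by rewrite /u; lra.
exists u; split; first by rewrite u0 u1.
have e : hh u = - (hh 0 - hh u) by rewrite hh0 sub0r opprK.
rewrite e hh_diff big_ord_recl /=.
have t1 : 0 <= \sum_(i < n) S (bump 0 i) * dl u 0 (bump 0 i).
  apply: sumr_ge0 => i _; apply: mulr_ge0; first exact: (S_ge0 _ (ltn_ord (lift ord0 i))).
  apply: dl_ge0 => //; try lra; exact: (ltn_ord (lift ord0 i)).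
have hd : dl u 0 0%N = ln (1 + Q 1%N * u) + K.
  rewrite /dl !mulr0 !addr0 ln1 hQ0 mul1r.
  have -> : 1 + u = expR (- K) by rewrite /u; lra.
  by rewrite expRK; lra.
have hl : ln m1 <= ln (1 + Q 1%N * u).
  rewrite ler_ln ?posrE //; last by apply: pos_arg => //; apply/andP; split; lra.
  have a1 : 0 <= 1 + u by lra.
  have a2 : 0 <= 1 - Q 1%N by lra.
  have a3 : 0 <= 1 + Q 1%N by lra.
  have a4 : 0 <= - u by lra.
  rewrite /m1; have := mulr_ge0 a1 a3; have := mulr_ge0 a4 a2; nra.
have hn : - `|ln m1| <= ln m1 by have := ler_norm (- ln m1); rewrite normrN; lra.
have ht : - `|tau| <= tau by have := ler_norm (- tau); rewrite normrN; lra.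
have : S 0%N * (`|tau| / S 0%N) = `|tau| by rewrite mulrC divfK //; apply: lt0r_neq0.
rewrite hd.
have : S 0%N * (ln (1 + Q 1%N * u) + K) >= S 0%N * (`|tau| / S 0%N + 1).
  apply: ler_wpM2l; first exact: ltW.
  rewrite /K; lra.
nra.
Qed.

Lemma hh_cont x : -1 < x < 1 -> {for x, continuous hh}.
Proof.
move=> hx.
apply: (@cont_sum n.+2 (fun k u => be k * ln (1 + Q k * u)) x) => k hk.
by apply: cont_term; apply: pos_arg.
Qed.

Lemma hh_surj tau : exists u, -1 < u < 1 /\ hh u = tau.
Proof.
have [a [/andP[ha1 ha2] hta]] := hh_below tau.
have [b [/andP[hb1 hb2] htb]] := hh_above tau.
have ab : a <= b by lra.
have hcont : ({within `[a, b], continuous hh})%classic.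
  apply: continuous_in_subspaceT => y; rewrite inE /= in_itv /= => /andP[y1 y2].
  apply: hh_cont; apply/andP; split; lra.
have hv : Num.min (hh a) (hh b) <= tau <= Num.max (hh a) (hh b).
  by rewrite ge_min le_max hta htb !orbT.
have [c hc hcv] := @IVT R hh a b tau ab hcont hv.
exists c; split => //.
move: hc; rewrite in_itv /= => /andP[c1 c2]; apply/andP; split; lra.
Qed.

End Mono.
Lemma core_bij (n : nat) (Q be : nat -> R) :
  Q 0%N = 1 -> Q n.+1 = -1 ->
  (forall k, (k < n.+1)%N -> Q k.+1 < Q k) ->
  ((forall k, (k < n.+1)%N -> 0 <= \sum_(k' < k.+1) be k') \/
   (forall k, (k < n.+1)%N -> \sum_(k' < k.+1) be k' <= 0)) ->
  \sum_(k < n.+2) be k = 0 ->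
  be 0%N * be n.+1 < 0 ->
  (forall u v, -1 < u < 1 -> -1 < v < 1 -> hh n Q be u = hh n Q be v -> u = v) /\
  (forall tau, exists u, -1 < u < 1 /\ hh n Q be u = tau).
Proof.
move=> hQ0 hQn hQdec hS hsum hprod.
have gen : forall be' : nat -> R, (forall k, (k < n.+1)%N -> 0 <= \sum_(k' < k.+1) be' k') ->
  \sum_(k < n.+2) be' k = 0 -> be' 0%N * be' n.+1 < 0 ->
  (forall u v, -1 < u < 1 -> -1 < v < 1 -> hh n Q be' u = hh n Q be' v -> u = v) /\
  (forall tau, exists u, -1 < u < 1 /\ hh n Q be' u = tau).
  move=> be' hS' hsum' hprod'; split; last by move=> tau; apply: hh_surj.
  move=> u v /andP[u1 u2] /andP[v1 v2] e.
  have [huv|huv|//] := ltgtP u v.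
    have : hh n Q be' u < hh n Q be' v by apply: hh_incr.
    by rewrite e ltxx.
  have : hh n Q be' v < hh n Q be' u by apply: hh_incr.
  by rewrite e ltxx.
case: hS => hS; first exact: gen.
have hN : forall u, hh n Q (fun k => - be k) u = - hh n Q be u.
  by move=> u; rewrite /hh -sumrN; apply: eq_bigr => k _; rewrite mulNr.
have p1 : forall k, (k < n.+1)%N -> 0 <= \sum_(k' < k.+1) (fun k => - be k) k'.
  by move=> k hk; rewrite sumrN oppr_ge0; apply: hS.
have p2 : \sum_(k < n.+2) (fun k => - be k) k = 0 by rewrite sumrN hsum oppr0.
have p3 : (fun k => - be k) 0%N * (fun k => - be k) n.+1 < 0 by rewrite mulrNN.
have [g1 g2] := gen (fun k => - be k) p1 p2 p3.
split.
  by move=> u v hu hv e; apply: g1 => //; rewrite !hN e.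
move=> tau; have [u [hu e]] := g2 (- tau); exists u; split => //.
by apply: oppr_inj; rewrite -hN.
Qed.

End Core.

Set Implicit Arguments. Unset Strict Implicit.

Section LA.
Variables (R : realType) (n m L : nat) (B : 'M[R]_(n, m)) (cls : 'I_m -> 'I_L).

Lemma tr_offj j : (offj R cls j)^T = offj R cls j.
Proof. by rewrite /offj tr_diag_mx. Qed.

Lemma sub_DjP k (K : 'M[R]_(k, m)) j :
  (K <= Djsp B cls j)%MS <->
  [/\ K *m B^T = 0, K *m (onesj R cls j)^T = 0 & K *m offj R cls j = 0].
Proof.
rewrite /Djsp; split.
  move/sub_kermxP/eqP; rewrite !tr_col_mx !mul_mx_row !row_mx_eq0 tr_offj.
  by case/andP => /andP[/eqP -> /eqP ->] /eqP ->.
case=> h1 h2 h3; apply/sub_kermxP.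
by rewrite !tr_col_mx !mul_mx_row tr_offj h1 h2 h3 !row_mx0.
Qed.

Lemma sub_DP k (K : 'M[R]_(k, m)) :
  (K <= Dsp B cls)%MS <-> K *m B^T = 0 /\ K *m (Jmat R cls)^T = 0.
Proof.
rewrite /Dsp; split.
  move/sub_kermxP/eqP; rewrite !tr_col_mx !mul_mx_row !row_mx_eq0.
  by case/andP => /eqP -> /eqP ->.
case=> h1 h2; apply/sub_kermxP.
by rewrite !tr_col_mx !mul_mx_row h1 h2 row_mx0.
Qed.

Lemma offj0P k (z : 'M[R]_(k, m)) j :
  z *m offj R cls j = 0 <-> forall r i, cls i != j -> z r i = 0.
Proof.
rewrite /offj mul_mx_diag; split.
  move=> /matrixP h r i hi; have := h r i; rewrite !mxE hi mulr1 => ->.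
  by [].
move=> h; apply/matrixP => r i; rewrite !mxE.
by case: (boolP (cls i != j)) => hi; [rewrite h // mul0r | rewrite mulr0].
Qed.

Lemma onesj0P k (z : 'M[R]_(k, m)) j :
  z *m (onesj R cls j)^T = 0 <-> forall r, \sum_(i | cls i == j) z r i = 0.
Proof.
have e : forall r, (z *m (onesj R cls j)^T) r 0 = \sum_(i | cls i == j) z r i.
  move=> r; rewrite !mxE [in RHS]big_mkcond /=; apply: eq_bigr => i _; rewrite !mxE.
  by case: (cls i == j); rewrite ?mulr1 ?mulr0.
split.
  by move=> h r; rewrite -e h mxE.
by move=> h; apply/matrixP => r c; rewrite ord1 e h mxE.
Qed.

Lemma J_aux k (K : 'M[R]_(k, m)) j :
  K *m (onesj R cls j)^T = 0 -> K *m offj R cls j = 0 -> K *m (Jmat R cls)^T = 0.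
Proof.
move=> /onesj0P h2 /offj0P h3.
apply/matrixP => r k'; rewrite /Jmat !mxE.
have [ekj|nkj] := eqVneq k' j.
  rewrite ekj; transitivity (\sum_(i | cls i == j) K r i); last exact: h2.
  rewrite [in RHS]big_mkcond /=; apply: eq_bigr => i _; rewrite !mxE.
  by case: (cls i == j); rewrite ?mulr1 ?mulr0.
apply: big1 => i _; rewrite !mxE.
have [eik|nik] := eqVneq (cls i) k'; last by rewrite mulr0.
by rewrite h3 ?mul0r // eik.
Qed.

Lemma Dj_sub_D j : (Djsp B cls j <= Dsp B cls)%MS.
Proof.
have [h1 h2 h3] := (sub_DjP (Djsp B cls j) j).1 (submx_refl _).
by apply/sub_DP; split => //; apply: J_aux h2 h3.
Qed.

Lemma diag_aux k (K : 'M[R]_(k, m)) i j :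
  j != i -> K *m offj R cls j = 0 -> K *m diag_mx (onesj R cls i) = 0.
Proof.
move=> hj /offj0P h3; rewrite mul_mx_diag; apply/matrixP => r k'; rewrite !mxE.
have [eki|nki] := eqVneq (cls k') i; last by rewrite mulr0.
by rewrite h3 ?mul0r // eki eq_sym.
Qed.

Lemma zero_aux k (K : 'M[R]_(k, m)) i :
  K *m offj R cls i = 0 -> K *m diag_mx (onesj R cls i) = 0 -> K = 0.
Proof.
move=> /offj0P h1; rewrite mul_mx_diag => /matrixP h2.
apply/matrixP => r k'; rewrite mxE.
have [eki|nki] := eqVneq (cls k') i; last by apply: h1.
by have := h2 r k'; rewrite !mxE eki eqxx mulr1.
Qed.

Lemma Dsum_direct : mxdirect (\sum_(j < L) Djsp B cls j).
Proof.
apply/mxdirect_sumsP => i _.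
set W := (Djsp B cls i :&: _)%MS.
have [_ _ h1] := (sub_DjP W i).1 (capmxSl _ _).
have h2 : (W <= kermx (diag_mx (onesj R cls i)))%MS.
  apply: submx_trans (capmxSr _ _) _.
  apply/sumsmx_subP => j /= hj; apply/sub_kermxP.
  have [_ _ h3] := (sub_DjP (Djsp B cls j) j).1 (submx_refl _).
  exact: diag_aux hj h3.
move/sub_kermxP: h2 => h2.
exact: zero_aux h1 h2.
Qed.

Lemma D_sub_sum : dimD B cls = (\sum_(j < L) dimDj B cls j)%N ->
  (Dsp B cls <= \sum_(j < L) Djsp B cls j)%MS.
Proof.
move=> hii.
have hsub : (\sum_(j < L) Djsp B cls j <= Dsp B cls)%MS.
  by apply/sumsmx_subP => j _; apply: Dj_sub_D.
have hr := mxdirectP Dsum_direct.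
rewrite -(mxrank_leqif_sup hsub).2 /= hr /dimD in hii *.
by rewrite hii.
Qed.

End LA.

Lemma sum_seq_pick (R : realType) (s : seq R) (q X : R) :
  uniq s -> q \in s -> \sum_(v <- s) (if q == v then X else 0) = X.
Proof.
elim: s => // v s IH /= /andP[vs us]; rewrite inE big_cons.
have [e|ne] := eqVneq q v => /= hq.
  rewrite big1_seq ?addr0 // => w /andP[_ ws]; have [e'|//] := eqVneq q w.
  by move: vs; rewrite -e e' ws.
by rewrite add0r IH.
Qed.

Section Grouping.
Variables (R : realType) (m L : nat) (cls : 'I_m -> 'I_L) (j : 'I_L)
  (Y1 Y2 bb : 'rV[R]_m).

Let qv := qvals cls j Y1 Y2.
Let q := qj Y1 Y2.

Lemma qv_uniq : uniq qv.
Proof. by rewrite /qv /qvals sort_uniq undup_uniq. Qed.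

Lemma qv_mem i : cls i == j -> q i \in qv.
Proof.
move=> hi; rewrite /qv /qvals mem_sort mem_undup.
by apply: map_f; rewrite mem_filter hi mem_enum.
Qed.

Lemma qv_memP v : v \in qv -> exists2 i, cls i == j & v = q i.
Proof.
rewrite /qv /qvals mem_sort mem_undup => /mapP[i].
by rewrite mem_filter => /andP[hi _] ->; exists i.
Qed.

Lemma grouping (G : R -> R) :
  \sum_(i | cls i == j) bb 0 i * G (q i) =
  \sum_(k < size qv) btilde cls j Y1 Y2 bb k * G (nth 0 qv k).
Proof.
rewrite -(big_mkord xpredT (fun k => btilde cls j Y1 Y2 bb k * G (nth 0 qv k))).
rewrite -(big_nth 0 xpredT (fun v => (\sum_(i | (cls i == j) && (q i == v)) bb 0 i) * G v)).
transitivity (\sum_(v <- qv) \sum_(i | cls i == j) (if q i == v then bb 0 i * G (q i) else 0)).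
  rewrite exchange_big /=; apply: eq_bigr => i hi.
  by rewrite sum_seq_pick // ?qv_uniq ?qv_mem.
apply: eq_bigr => v _; rewrite mulr_suml big_mkcondr /=.
apply: eq_bigr => i _; case: eqP => // ->.
by [].
Qed.

End Grouping.

Section Endpoint.
Variables (R : realType) (l m L : nat) (A : 'M[R]_(l, m)) (cls : 'I_m -> 'I_L)
  (j : 'I_L).

Lemma seg_ends (Y1 Y2 : 'rV[R]_m) :
  (forall y, Pbarj A cls j y <->
     exists t : R, 0 <= t <= 1 /\ y = (1 - t) *: Y1 + t *: Y2) ->
  Pbarj A cls j Y1 /\ Pbarj A cls j Y2.
Proof.
move=> hseg; split; apply/hseg.
  by exists 0; rewrite lexx ler01 subr0 scale1r scale0r addr0.
by exists 1; rewrite lexx ler01 subrr scale1r scale0r add0r.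
Qed.

Lemma endpoint_zero (Y1 Y2 : 'rV[R]_m) :
  Y1 != Y2 ->
  (forall y, Pbarj A cls j y <->
     exists t : R, 0 <= t <= 1 /\ y = (1 - t) *: Y1 + t *: Y2) ->
  exists2 i, cls i == j & Y2 0 i = 0.
Proof.
move=> hne hseg.
have [[o1 p1 a1 s1] [o2 p2 a2 s2]] := seg_ends hseg.
case: (boolP [exists i, (cls i == j) && (Y2 0 i == 0)]).
  by case/existsP => i /andP[h1 /eqP h2]; exists i.
move/existsPn => hno; exfalso.
have pos : forall i, cls i == j -> 0 < Y2 0 i.
  move=> i hi; rewrite lt_neqAle p2 // andbT eq_sym.
  by have := hno i; rewrite hi.
set T := \sum_(i | cls i == j) Y1 0 i / Y2 0 i.
have T0 : 0 <= T by apply: sumr_ge0 => i hi; apply: divr_ge0; [apply: p1 | apply/ltW/pos].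
set e := (1 + T)^-1.
have e0 : 0 < e by rewrite invr_gt0; lra.
have key : forall i, cls i == j -> e * Y1 0 i <= Y2 0 i.
  move=> i hi.
  have h1 : Y1 0 i / Y2 0 i <= T.
    rewrite /T (bigD1 i) //= lerDl; apply: sumr_ge0 => k /andP[hk _].
    by apply: divr_ge0; [apply: p1 | apply/ltW/pos].
  move: h1; rewrite ler_pdivrMr ?pos // => h1.
  rewrite mulrC ler_pdivrMr; last lra.
  have := p1 i hi; have := pos i hi; nra.
set z := (1 + e) *: Y2 - e *: Y1.
have hz : Pbarj A cls j z.
  split.
  - by move=> i hi; rewrite !mxE o1 ?o2 // !mulr0 subrr.
  - move=> i hi; rewrite !mxE; have := key i hi; have := pos i hi; nra.
  - by rewrite linearB /= !linearZ /= mulmxDr -!scalemxAr mulmxN a1 a2 oppr0 !scaler0 addr0.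
  - rewrite (eq_bigr (fun i => (1 + e) * Y2 0 i - e * Y1 0 i)); last by move=> i _; rewrite !mxE.
    by rewrite sumrB -!mulr_sumr s1 s2; ring.
have [t [/andP[t0 t1] ez]] := (hseg z).1 hz.
apply: (negP hne); apply/eqP/matrixP => r i; rewrite ord1 {r}.
have := congr1 (fun M : 'rV[R]_m => M 0 i) ez; rewrite /z !mxE => h.
have h2 : (1 + e - t) * (Y2 0 i - Y1 0 i) =
   ((1 + e) * Y2 0 i - e * Y1 0 i) - ((1 - t) * Y1 0 i + t * Y2 0 i) by ring.
rewrite h subrr in h2; move/eqP: h2; rewrite mulf_eq0 => /orP[/eqP|/eqP]; first lra.
by move/eqP; rewrite subr_eq0 => /eqP.
Qed.

End Endpoint.

Lemma Pj_Pbarj (R : realType) (l m L : nat) (A : 'M[R]_(l, m)) (cls : 'I_m -> 'I_L) j y :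
  Pj A cls j y -> Pbarj A cls j y.
Proof. by case=> h1 h2 h3 h4; split => // i hi; apply/ltW/h2. Qed.

Lemma pos_arg1 (R : realType) (q u : R) : -1 <= q <= 1 -> -1 < u < 1 -> 0 < 1 + q * u.
Proof.
move=> /andP[q1 q2] /andP[h1 h2].
have [q0|q0] := leP 0 q; nra.
Qed.

Section ClassAnalysis.
Variables (R : realType) (l m L : nat) (A : 'M[R]_(l, m)) (cls : 'I_m -> 'I_L)
  (j : 'I_L) (Y1 Y2 bb : 'rV[R]_m).
Hypotheses
  (hne : Y1 != Y2)
  (hseg : forall y, Pbarj A cls j y <->
     exists t : R, 0 <= t <= 1 /\ y = (1 - t) *: Y1 + t *: Y2)
  (hPne : exists x, Pj A cls j x)
  (hboff : forall i, cls i != j -> bb 0 i = 0)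
  (hbsum : \sum_(i | cls i == j) bb 0 i = 0)
  (hsign : let om := size (qvals cls j Y1 Y2) in
        let bt := btilde cls j Y1 Y2 bb in
        ((forall k, (k < om.-1)%N -> 0 <= \sum_(k' < k.+1) bt k') \/
         (forall k, (k < om.-1)%N -> \sum_(k' < k.+1) bt k' <= 0)) /\
        bt 0%N * bt om.-1 < 0).

Let q := qj Y1 Y2.
Let qv := qvals cls j Y1 Y2.

Lemma Yge0 : (forall i, cls i == j -> 0 <= Y1 0 i) /\ (forall i, cls i == j -> 0 <= Y2 0 i).
Proof. by have [[_ p1 _ _] [_ p2 _ _]] := seg_ends hseg. Qed.

Lemma Yoff : (forall i, cls i != j -> Y1 0 i = 0) /\ (forall i, cls i != j -> Y2 0 i = 0).
Proof. by have [[p1 _ _ _] [p2 _ _ _]] := seg_ends hseg. Qed.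

Lemma s_pos i : cls i == j -> 0 < Y1 0 i + Y2 0 i.
Proof.
move=> hi; have [x hx] := hPne.
have [t [/andP[t0 t1] ex]] := (hseg x).1 (Pj_Pbarj hx).
have [_ p _ _] := hx; have := p i hi; rewrite ex !mxE => h.
have [g1 g2] := Yge0; have := g1 i hi; have := g2 i hi => a b.
have c1 : 0 <= t * Y1 0 i by apply: mulr_ge0.
have c2 : 0 <= (1 - t) * Y2 0 i by apply: mulr_ge0; lra.
nra.
Qed.

Lemma q_bounds i : cls i == j -> -1 <= q i <= 1.
Proof.
move=> hi; have sp := s_pos hi; have [g1 g2] := Yge0.
have := g1 i hi; have := g2 i hi => a b.
rewrite /q /qj; apply/andP; split.
  by rewrite ler_pdivlMr //; lra.
by rewrite ler_pdivrMr //; lra.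
Qed.

Lemma hseg' : forall y, Pbarj A cls j y <->
     exists t : R, 0 <= t <= 1 /\ y = (1 - t) *: Y2 + t *: Y1.
Proof.
move=> y; rewrite hseg; split => -[t [/andP[t0 t1] ->]]; exists (1 - t).
  split; first by apply/andP; split; lra.
  by rewrite addrC; congr (_ *: _ + _ *: _); ring.
split; first by apply/andP; split; lra.
by rewrite addrC; congr (_ *: _ + _ *: _); ring.
Qed.

Lemma one_mem : 1 \in qv.
Proof.
have [i hi e] := endpoint_zero hne hseg.
have := qv_mem Y1 Y2 hi; rewrite -/qv.
suff -> : qj Y1 Y2 i = 1 by [].
have sp := s_pos hi; rewrite e addr0 in sp.
by rewrite /qj e subr0 addr0 divff // gt_eqF.
Qed.

Lemma mone_mem : -1 \in qv.
Proof.
have hne' : Y2 != Y1 by rewrite eq_sym.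
have [i hi e] := endpoint_zero hne' hseg'.
have := qv_mem Y1 Y2 hi; rewrite -/qv.
suff -> : qj Y1 Y2 i = -1 by [].
have sp := s_pos hi; rewrite e add0r in sp.
by rewrite /qj e sub0r add0r mulNr divff // gt_eqF.
Qed.

Let r := fun a b : R => b <= a.
Lemma r_trans : transitive r.
Proof. by move=> y x z h1 h2; rewrite /r; apply: le_trans h2 h1. Qed.
Lemma r_refl : reflexive r.
Proof. by move=> x; rewrite /r. Qed.
Lemma qv_sorted : sorted r qv.
Proof. apply: sort_sorted => x y; rewrite /r; exact: le_total. Qed.

Lemma qv_all v : v \in qv -> -1 <= v <= 1.
Proof. by case/qv_memP => i hi ->; apply: q_bounds. Qed.

Lemma qv_size : (1 < size qv)%N.
Proof.
have s0 : (0 < size qv)%N by case: qv one_mem.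
have hmax : forall k, (k < size qv)%N -> nth 0 qv k <= nth 0 qv 0.
  move=> k hk; apply: (sorted_leq_nth r_trans r_refl 0 qv_sorted) => //.
have hmin : forall k, (k < size qv)%N -> nth 0 qv (size qv).-1 <= nth 0 qv k.
  move=> k hk; apply: (sorted_leq_nth r_trans r_refl 0 qv_sorted) => //.
    by rewrite inE prednK.
  by rewrite -ltnS prednK.
move: one_mem mone_mem => h1 h2.
have i1 : (index 1%R qv < size qv)%N by rewrite index_mem.
have i2 : (index (-1)%R qv < size qv)%N by rewrite index_mem.
have := hmax _ i1; rewrite nth_index // => a.
have := hmin _ i2; rewrite nth_index // => b.
move: s0 a b; case: (size qv) => [|[|k]] //= _ a b; lra.
Qed.

Lemma Q0 : nth 0 qv 0 = 1.
Proof.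
have s0 : (0 < size qv)%N by apply: ltn_trans qv_size.
apply/le_anti/andP; split.
  by have /andP[_ ->] := qv_all (mem_nth 0 s0).
have i1 : (index 1%R qv < size qv)%N by rewrite index_mem one_mem.
have := (sorted_leq_nth r_trans r_refl 0 qv_sorted) 0%N (index 1%R qv).
by rewrite nth_index ?one_mem //; apply.
Qed.

Lemma Qlast : nth 0 qv (size qv).-1 = -1.
Proof.
have s0 : (0 < size qv)%N by apply: ltn_trans qv_size.
have sl : ((size qv).-1 < size qv)%N by rewrite prednK.
apply/le_anti/andP; split; last first.
  by have /andP[-> _] := qv_all (mem_nth 0 sl).
have i1 : (index (-1)%R qv < size qv)%N by rewrite index_mem mone_mem.
have := (sorted_leq_nth r_trans r_refl 0 qv_sorted) (index (-1)%R qv) (size qv).-1.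
rewrite nth_index ?mone_mem //; apply => //.
by rewrite -ltnS prednK.
Qed.

Lemma Qdec k : (k.+1 < size qv)%N -> nth 0 qv k.+1 < nth 0 qv k.
Proof.
move=> hk; have hk' : (k < size qv)%N by apply: ltn_trans hk.
rewrite lt_neqAle.
have hu : uniq qv by apply: qv_uniq.
have -> : (nth 0 qv k.+1 != nth 0 qv k).
  by rewrite (nth_uniq 0 hk hk' hu) (gtn_eqF (ltnSn k)).
have := (sorted_ltn_nth r_trans 0 qv_sorted) k k.+1.
by apply.
Qed.

Definition Fb (y : 'rV[R]_m) := \sum_i bb 0 i * ln (y 0 i).
Definition yt (t : R) : 'rV[R]_m := (1 - t) *: Y1 + t *: Y2.
Definition Cb := \sum_(i | cls i == j) bb 0 i * ln ((Y1 0 i + Y2 0 i) / 2).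

Lemma Pj_yt t : 0 < t < 1 -> Pj A cls j (yt t).
Proof.
move=> /andP[t0 t1].
have [o a s] : [/\ forall i, cls i != j -> yt t 0 i = 0, A *m (yt t)^T = 0
   & \sum_(i | cls i == j) yt t 0 i = 1].
  have [o _ a s] := (hseg (yt t)).2 (ex_intro _ t (conj (introT andP (conj (ltW t0) (ltW t1))) erefl)).
  by [].
split => // i hi; rewrite /yt !mxE.
have sp := s_pos hi; have [g1 g2] := Yge0; have := g1 i hi; have := g2 i hi => a1 b1.
have c1 : 0 <= (1 - t) * Y1 0 i by apply: mulr_ge0; lra.
have c2 : 0 <= t * Y2 0 i by apply: mulr_ge0; lra.
have [y1p|y1n] := ltP 0 (Y1 0 i).
  have : 0 < (1 - t) * Y1 0 i by apply: mulr_gt0; lra.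
  lra.
have : 0 < t * Y2 0 i by apply: mulr_gt0; lra.
lra.
Qed.

Lemma Pj_yt_inv y : Pj A cls j y -> exists t, 0 < t < 1 /\ y = yt t.
Proof.
move=> hy; have [t [/andP[t0 t1] ey]] := (hseg y).1 (Pj_Pbarj hy).
exists t; split => //.
have [_ p _ _] := hy.
apply/andP; split.
  rewrite lt_neqAle t0 andbT; apply/eqP => et; subst t.
  have hne' : Y2 != Y1 by rewrite eq_sym.
  have [i hi e] := endpoint_zero hne' hseg'.
  have := p i hi; rewrite ey !mxE e; lra.
rewrite lt_neqAle t1 andbT; apply/eqP => et; subst t.
have [i hi e] := endpoint_zero hne hseg.
have := p i hi; rewrite ey !mxE e; lra.
Qed.

Lemma Fb_off y : Fb y = \sum_(i | cls i == j) bb 0 i * ln (y 0 i).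
Proof.
rewrite /Fb (bigID (fun i => cls i == j)) /= [X in _ + X]big1 ?addr0 // => i hi.
by rewrite hboff ?mul0r.
Qed.

Lemma F_yt t : 0 < t < 1 -> Fb (yt t) = Cb +
  \sum_(k < size qv) btilde cls j Y1 Y2 bb k * ln (1 + nth 0 qv k * (1 - 2 * t)).
Proof.
move=> /andP[t0 t1].
rewrite Fb_off -(grouping cls j Y1 Y2 bb (fun v => ln (1 + v * (1 - 2 * t)))) /Cb -big_split /=.
apply: eq_bigr => i hi; rewrite -mulrDr; congr (_ * _).
have sp := s_pos hi.
have hu : -1 < 1 - 2 * t < 1 by apply/andP; split; lra.
have e : yt t 0 i = ((Y1 0 i + Y2 0 i) / 2) * (1 + q i * (1 - 2 * t)).
  rewrite /yt !mxE /q /qj; field; lra.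
rewrite e lnM ?posrE //; first by apply: divr_gt0.
exact: pos_arg1 (q_bounds hi) hu.
Qed.

Lemma class_main :
  (forall y y', Pj A cls j y -> Pj A cls j y' -> Fb y = Fb y' -> y = y') /\
  (forall tau, exists y, Pj A cls j y /\ Fb y = tau).
Proof.
have hsz := qv_size.
have [n hn] : exists n, size qv = n.+2.
  by exists (size qv).-2; case: (size qv) hsz => [|[|k]].
have hQ0 : nth 0 qv 0 = 1 := Q0.
have hQn : nth 0 qv n.+1 = -1 by have := Qlast; rewrite hn.
have hQd : forall k, (k < n.+1)%N -> nth 0 qv k.+1 < nth 0 qv k.
  by move=> k hk; apply: Qdec; rewrite hn.
have [hS hprod] := hsign; rewrite /= -/qv hn /= in hS hprod.
have hsum : \sum_(k < n.+2) btilde cls j Y1 Y2 bb k = 0.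
  have g := grouping cls j Y1 Y2 bb (fun _ => 1); rewrite -/qv hn in g.
  transitivity (\sum_(k < n.+2) btilde cls j Y1 Y2 bb k * 1).
    by apply: eq_bigr => k _; rewrite mulr1.
  rewrite -g -[in RHS]hbsum; apply: eq_bigr => i _; by rewrite mulr1.
have [inj surj] := @core_bij R n (nth 0 qv) (btilde cls j Y1 Y2 bb) hQ0 hQn hQd hS hsum hprod.
have FE : forall t, 0 < t < 1 -> Fb (yt t) = Cb + hh R n (nth 0 qv) (btilde cls j Y1 Y2 bb) (1 - 2 * t).
  by move=> t ht; rewrite F_yt // hn.
split.
  move=> y y' hy hy' e.
  have [t [ht ey]] := Pj_yt_inv hy; have [t' [ht' ey']] := Pj_yt_inv hy'; subst y y'.
  rewrite (FE _ ht) (FE _ ht') in e.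
  have e2 : hh R n (nth 0 qv) (btilde cls j Y1 Y2 bb) (1 - 2 * t) = hh R n (nth 0 qv) (btilde cls j Y1 Y2 bb) (1 - 2 * t') by lra.
  move: ht ht' => /andP[t0 t1] /andP[t0' t1'].
  have := inj _ _ _ _ e2.
  have a1 : -1 < 1 - 2 * t < 1 by apply/andP; split; lra.
  have a2 : -1 < 1 - 2 * t' < 1 by apply/andP; split; lra.
  by move=> /(_ a1 a2) e3; congr yt; lra.
move=> tau; have [u [/andP[u0 u1] hu]] := surj (tau - Cb).
have ht : 0 < (1 - u) / 2 < 1 by apply/andP; split; lra.
exists (yt ((1 - u) / 2)); split; first exact: Pj_yt.
rewrite FE //.
have -> : 1 - 2 * ((1 - u) / 2) = u by field.
by rewrite hu; lra.
Qed.

End ClassAnalysis.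

Lemma affdim0 (R : realType) (m : nat) (S : 'rV[R]_m -> Prop) :
  affdim S 0 -> (exists x, S x) /\ forall x y, S x -> S y -> x = y.
Proof.
case=> ex [V [rk hsub _]]; split => // x y hx hy.
have V0 : V = 0 by apply/eqP; rewrite -mxrank_eq0 rk.
have := hsub x y hx hy; rewrite V0 submx0 subr_eq0 => /eqP //.
Qed.

Lemma mpow_exp (R : realType) (m : nat) (y z : 'rV[R]_m) :
  (forall i, 0 < y 0 i) -> mpow y z = expR (\sum_i z 0 i * ln (y 0 i)).
Proof.
move=> hy; rewrite /mpow expR_sum; apply: eq_bigr => i _.
by rewrite /powR gt_eqF.
Qed.

Lemma Fb_eq (R : realType) (m L : nat) (cls : 'I_m -> 'I_L) j (bb y y' : 'rV[R]_m) :
  (forall i, cls i != j -> bb 0 i = 0) -> (forall i, cls i == j -> y 0 i = y' 0 i) ->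
  Fb bb y = Fb bb y'.
Proof.
move=> h1 h2; rewrite /Fb; apply: eq_bigr => i _.
have [e|ne] := eqVneq (cls i) j; first by rewrite h2 // e.
by rewrite h1 // !mul0r.
Qed.

Unset Implicit Arguments. Set Strict Implicit.

Theorem theorem4 (R : realType) (l n m L : nat)
    (A : 'M[R]_(l, m)) (B : 'M[R]_(n, m)) (cls : 'I_m -> 'I_L)
    (* ker A = ker A_1 x ... x ker A_L *)
    (hker : forall y : 'rV[R]_m,
        A *m y^T = 0 <-> forall j, A *m (clmask cls j y)^T = 0)
    (* (i) *)
    (hi : exists y : 'rV[R]_m, (forall i, 0 < y 0 i) /\ A *m y^T = 0)
    (* (ii) *)
    (hii : dimD B cls = (\sum_(j < L) dimDj B cls j)%N)
    (* (iii), dimension part: d_j = dim P_j <= 1 *)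
    (hiii_dim : forall j, affdim (Pj A cls j) (dimDj B cls j) /\ (dimDj B cls j <= 1)%N)
    (* endpoints y^{j,1}, y^{j,2} of the segment closure(P_j) *)
    (y1 y2 : 'I_L -> 'rV[R]_m)
    (hend : forall j, dimDj B cls j = 1%N ->
        y1 j != y2 j /\
        forall y, Pbarj A cls j y <->
          exists t : R, 0 <= t <= 1 /\ y = (1 - t) *: y1 j + t *: y2 j)
    (* b^j spans ker (B_j ; 1^T) *)
    (b : 'I_L -> 'rV[R]_m)
    (hb : forall j, dimDj B cls j = 1%N -> (b j == Djsp B cls j)%MS)
    (* (iii), sign part *)
    (hiii_sign : forall j, dimDj B cls j = 1%N ->
        let om := size (qvals cls j (y1 j) (y2 j)) in
        let bt := btilde cls j (y1 j) (y2 j) (b j) in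
        ((forall k, (k < om.-1)%N -> 0 <= \sum_(k' < k.+1) bt k') \/
         (forall k, (k < om.-1)%N -> \sum_(k' < k.+1) bt k' <= 0)) /\
        bt 0%N * bt om.-1 < 0) :
  forall c : 'rV[R]_m, (forall i, 0 < c 0 i) ->
    exists! y : 'rV[R]_m, Yc A B cls c y.
Proof.
move=> c cpos.
have hbprop : forall j, dimDj B cls j = 1%N ->
    (forall i, cls i != j -> b j 0 i = 0) /\ \sum_(i | cls i == j) b j 0 i = 0.
  move=> j hj; have /andP[hb1 _] := hb j hj.
  have [_ /onesj0P h2 /offj0P h3] := (sub_DjP B cls (b j) j).1 hb1.
  by split; [move=> i hi0; apply: h3 | apply: h2].
have H : forall j,
   (forall y y', Pj A cls j y -> Pj A cls j y' ->
      (dimDj B cls j = 1%N -> Fb (b j) y = Fb (b j) y') -> y = y') /\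
   (exists y, Pj A cls j y /\ (dimDj B cls j = 1%N -> Fb (b j) y = Fb (b j) c)).
  move=> j; have [ha hle] := hiii_dim j.
  case hd : (dimDj B cls j) hle ha => [|[|k]] // _ ha.
    have [[x hx] uq] := affdim0 ha.
    by split; [move=> y y' hy hy' _; apply: uq | exists x].
  have [hne hseg] := hend j hd.
  have [hoff hsum] := hbprop j hd.
  have [uq ex] := class_main hne hseg ha.1 hoff hsum (hiii_sign j hd).
  split; first by move=> y y' hy hy' /(_ erefl); apply: uq.
  by have [y [hy e]] := ex (Fb (b j) c); exists y.
have posY : forall y, Ppoly A cls y -> forall i, 0 < y 0 i.
  move=> y hy i; have [_ p _ _] := hy (cls i); have := p i (eqxx _).
  by rewrite /clmask mxE eqxx.
have Fc : forall y, Yc A B cls c y -> forall j, dimDj B cls j = 1%N ->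
    Fb (b j) y = Fb (b j) c.
  move=> y [hP hz] j hj.
  have hsub : (b j <= Dsp B cls)%MS.
    have /andP[hb1 _] := hb j hj.
    exact: submx_trans hb1 (Dj_sub_D B cls j).
  have := hz _ hsub; rewrite !mpow_exp //; last exact: posY.
  by move/expR_inj.
have [Yf hYf] := @choice _ _
  (fun j y => Pj A cls j y /\ (dimDj B cls j = 1%N -> Fb (b j) y = Fb (b j) c))
  (fun j => (H j).2).
have [yy hyy] : exists yy : 'rV[R]_m, forall i, yy 0 i = Yf (cls i) 0 i.
  by exists (\row_i Yf (cls i) 0 i) => i; rewrite mxE.
have hcl : forall j, clmask cls j yy = Yf j.
  move=> j; apply/matrixP => r i; rewrite ord1 /clmask mxE.
  have [e|ne] := eqVneq (cls i) j; first by rewrite hyy e.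
  by have [o _ _ _] := (hYf j).1; rewrite o.
have ypos : forall i, 0 < yy 0 i.
  by move=> i; rewrite hyy; have [_ p _ _] := (hYf (cls i)).1; apply: p.
have hYc : Yc A B cls c yy.
  split; first by move=> j; rewrite hcl; exact: (hYf j).1.
  move=> z hz; rewrite !mpow_exp //; congr expR.
  have [v hv] : exists v : 'cV[R]_m, forall i, v i 0 = ln (yy 0 i) - ln (c 0 i).
    by exists (\col_i (ln (yy 0 i) - ln (c 0 i))) => i; rewrite mxE.
  have hk : (z <= kermx v)%MS.
    apply: submx_trans hz _; apply: submx_trans (D_sub_sum hii) _.
    apply/sumsmx_subP => j _.
    have hle := (hiii_dim j).2.
    case hd : (dimDj B cls j) hle => [|[|k]] // _.
      move/eqP: hd; rewrite /dimDj mxrank_eq0 => /eqP ->; exact: sub0mx.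
    have /andP[_ hb2] := hb j hd.
    apply: submx_trans hb2 _; apply/sub_kermxP.
    apply/matrixP => r k; rewrite !ord1 [RHS]mxE mxE.
    have [hoff _] := hbprop j hd.
    have e := (hYf j).2 hd.
    have e2 : Fb (b j) yy = Fb (b j) (Yf j).
      by apply: Fb_eq hoff _ => i hi0; rewrite hyy (eqP hi0).
    transitivity (Fb (b j) yy - Fb (b j) c); last by rewrite e2 e subrr.
    rewrite /Fb -sumrB; apply: eq_bigr => i _; by rewrite hv mulrBr.
  move/sub_kermxP: hk => /matrixP /(_ 0 0); rewrite [RHS]mxE mxE => h.
  apply/eqP; rewrite -subr_eq0 -sumrB; apply/eqP; rewrite -[RHS]h.
  by apply: eq_bigr => i _; rewrite hv mulrBr.
exists yy; split => // w hw.
apply/matrixP => r i; rewrite ord1 {r}.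
have ej : clmask cls (cls i) yy = clmask cls (cls i) w.
  have [uq _] := H (cls i); apply: uq.
  - by have [hP _] := hYc; apply: hP.
  - by have [hP _] := hw; apply: hP.
  - move=> hd; have [hoff _] := hbprop _ hd.
    have cm : forall y, Fb (b (cls i)) (clmask cls (cls i) y) = Fb (b (cls i)) y.
      by move=> y; apply: Fb_eq hoff _ => k hk; rewrite /clmask mxE hk.
    by rewrite !cm (Fc _ hYc _ hd) (Fc _ hw _ hd).
by have := congr1 (fun M : 'rV[R]_m => M 0 i) ej; rewrite /clmask !mxE eqxx.
Qed.
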